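(* Assume the standing setting below. Let $\psi:(0,\infty)\to(0,\infty)$ be nonincreasing, bounded, and slowly varying (for each $K>0$ there are constants $0<c_K\le C_K$ with $c_K\psi(q)\le\psi(Kq)\le C_K\psi(q)$ for all $q$). Put $\Psi(t):=-\log\psi(e^t)$. Then a point $x=\pi(\omega)\in J$ is badly symbolically approximable with respect to $\psi$ if and only if there exists $K<\infty$ such that for every $\ell\in\mathbb{N}$ and every finite word $\eta$ of length $r$ which occurs at two distinct positions (possibly overlapping) in the initial segment $\omega_1^\ell=(\omega_1,\dots,\omega_\ell)$, we have \[ \ell_{\mathrm p}(\eta)\le K+\Psi\big(\ell_{\mathrm p}(\omega_1^{\ell-r})\big). \]
   Context: Standing setting: $(u_a)_{a\in E}$ is a rational IFS on $\mathbb{R}$, $u_a(x)=\frac{p_a}{q_a}x+\frac{r_a}{q_a}$ with $p_a\in\{\pm1\}$, $r_a\in\mathbb{Z}$, $q_a\in\mathbb{N}$, $q_a\ge2$, satisfying the strong separation condition: there is a closed interval $I$ such that the sets $u_a(I)$, $a\in E$, are pairwise disjoint subsets of $I$. $\pi(\omega)=\lim_n u_{\omega_1}\circ\cdots\circ u_{\omega_n}(0)$ is the coding map (a bijection onto the limit set $J$), and every rational in $J$ has an eventually periodic coding. Intrinsic denominator: for $p/q\in\mathbb{Q}\cap J$ with coding $\omega$, let $n\ge0$ be minimal such that $(\omega_{i})_{i>n}$ is periodic and $m\ge1$ its minimal period; set $q_{(1)}=\prod_{i=1}^n q_{\omega_i}$, $q_{(2)}=\prod_{i=1}^m q_{\omega_{n+i}}$,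 $p_{(2)}=\prod_{i=1}^m p_{\omega_{n+i}}$, and $q_{\mathrm{int}}:=q_{(1)}(q_{(2)}-p_{(2)})$. A point $x\in J$ is badly symbolically approximable w.r.t. $\psi$ if there is $\varepsilon>0$ such that $|x-p/q|\ge\varepsilon\psi(q_{\mathrm{int}})/q_{\mathrm{int}}$ for all $p/q\in\mathbb{Q}\cap J$; otherwise symbolically well approximable. The pseudolength of a finite word $\eta=(\eta_1,\dots,\eta_r)$ is $\ell_{\mathrm p}(\eta)=\sum_{i=1}^r\log q_{\eta_i}$. *)

(* Defs.v *)
From Stdlib Require Import Reals Lra Lia ZArith Arith.
Open Scope R_scope.

(* Infinite words are functions w : nat -> nat with w i < N; the paper's
   omega_1, omega_2, ... is w 0, w 1, ... (0-indexed). *)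

Definition u (p r : nat -> Z) (q : nat -> nat) (a : nat) (x : R) : R :=
  (IZR (p a) * x + IZR (r a)) / INR (q a).

Definition rational_IFS_SSC (N : nat) (p r : nat -> Z) (q : nat -> nat) : Prop :=
  (forall a, (a < N)%nat -> (p a = 1%Z \/ p a = (-1)%Z) /\ (2 <= q a)%nat) /\
  exists lo hi : R, lo <= hi /\
    (forall a, (a < N)%nat -> forall x, lo <= x <= hi ->
        lo <= u p r q a x <= hi) /\
    (forall a b, (a < N)%nat -> (b < N)%nat -> a <> b ->
        forall x y, lo <= x <= hi -> lo <= y <= hi -> u p r q a x <> u p r q b y).

Definition valid_word (N : nat) (w : nat -> nat) : Prop := forall i, (w i < N)%nat.

(* u_{w 0} o u_{w 1} o ... o u_{w (n-1)} applied to x *)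
Fixpoint comp (p r : nat -> Z) (q : nat -> nat) (w : nat -> nat) (n : nat) (x : R) : R :=
  match n with
  | O => x
  | S k => comp p r q w k (u p r q (w k) x)
  end.

Definition coding (p r : nat -> Z) (q : nat -> nat) (w : nat -> nat) (x : R) : Prop :=
  Un_cv (fun n => comp p r q w n 0) x.

Definition is_rational (y : R) : Prop :=
  exists a b : Z, b <> 0%Z /\ y = IZR a / IZR b.

Fixpoint prodZ (f : nat -> Z) (n : nat) : Z :=
  match n with O => 1%Z | S k => (prodZ f k * f k)%Z end.

(* (w_i)_{i > n} (1-indexed) is periodic with period m *)
Definition periodic_from (w : nat -> nat) (n m : nat) : Prop :=
  (1 <= m)%nat /\ forall i, (n <= i)%nat -> w (i + m)%nat = w i.

Definition min_preperiod (w : nat -> nat) (n : nat) : Prop :=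
  (exists m, periodic_from w n m) /\
  forall n', (exists m, periodic_from w n' m) -> (n <= n')%nat.

Definition min_period (w : nat -> nat) (n m : nat) : Prop :=
  periodic_from w n m /\ forall m', periodic_from w n m' -> (m <= m')%nat.

(* intrinsic denominator q_int = q_(1) (q_(2) - p_(2)) *)
Definition q_int (p : nat -> Z) (q : nat -> nat) (w : nat -> nat) (n m : nat) : Z :=
  (prodZ (fun i => Z.of_nat (q (w i))) n *
   (prodZ (fun i => Z.of_nat (q (w (n + i)%nat))) m
    - prodZ (fun i => p (w (n + i)%nat)) m))%Z.

Definition badly_symb_approx (N : nat) (p r : nat -> Z) (q : nat -> nat)
    (psi : R -> R) (x : R) : Prop :=
  exists eps : R, eps > 0 /\
    forall (y : R) (w' : nat -> nat) (n m : nat),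
      is_rational y -> valid_word N w' -> coding p r q w' y ->
      min_preperiod w' n -> min_period w' n m ->
      Rabs (x - y) >= eps * psi (IZR (q_int p q w' n m)) / IZR (q_int p q w' n m).

Fixpoint sumR (f : nat -> R) (n : nat) : R :=
  match n with O => 0 | S k => sumR f k + f k end.

Definition pseudolength (q : nat -> nat) (w : nat -> nat) (i len : nat) : R :=
  sumR (fun k => ln (INR (q (w (i + k)%nat)))) len.

Definition admissible_psi (psi : R -> R) : Prop :=
  (forall t, 0 < t -> 0 < psi t) /\
  (forall s t, 0 < s -> s <= t -> psi t <= psi s) /\
  (exists B, forall t, 0 < t -> psi t <= B) /\
  (forall K, 0 < K -> exists cK CK, 0 < cK /\ cK <= CK /\
     forall t, 0 < t -> cK * psi t <= psi (K * t) /\ psi (K * t) <= CK * psi t).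

Definition Psi (psi : R -> R) (t : R) : R := - ln (psi (exp t)).

(* Main.v *)
Require Import Defs.
From Stdlib Require Import Reals Lra Lia ZArith Arith Classical.
Require Import Defs.
Open Scope R_scope.

Definition QZ (q : nat -> nat) (v : nat -> nat) (n : nat) : Z :=
  prodZ (fun i => Z.of_nat (q (v i))) n.
Definition PZ (p : nat -> Z) (v : nat -> nat) (n : nat) : Z :=
  prodZ (fun i => p (v i)) n.
Fixpoint RZ (p r : nat -> Z) (q : nat -> nat) (v : nat -> nat) (n : nat) : Z :=
  match n with O => 0%Z
  | S k => (PZ p v k * r (v k) + RZ p r q v k * Z.of_nat (q (v k)))%Z end.

Definition goodw (p : nat -> Z) (q : nat -> nat) (v : nat -> nat) : Prop :=
  forall i, (p (v i) = 1%Z \/ p (v i) = (-1)%Z) /\ (2 <= q (v i))%nat.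

Lemma goodw_shift p q v k : goodw p q v -> goodw p q (fun i => v (k + i)%nat).
Proof. intros H i. apply H. Qed.

Lemma prodZ_ext f g n : (forall i, (i < n)%nat -> f i = g i) -> prodZ f n = prodZ g n.
Proof. induction n; intros H; simpl; auto. rewrite IHn by (intros; apply H; lia). rewrite H by lia. auto. Qed.

Lemma prodZ_split f n m : prodZ f (n + m) = (prodZ f n * prodZ (fun i => f (n + i)%nat) m)%Z.
Proof. induction m; simpl. rewrite Nat.add_0_r; ring. rewrite Nat.add_succ_r. simpl. rewrite IHm. ring. Qed.

Lemma QZ_ge p q v n : goodw p q v -> (Z.of_nat n + 1 <= QZ q v n)%Z.
Proof. intros H. induction n; unfold QZ in *; simpl. lia.
  destruct (H n) as [_ Hq]. nia. Qed.

Lemma QZ_split q v n m : QZ q v (n + m) = (QZ q v n * QZ q (fun i => v (n + i)%nat) m)%Z.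
Proof. unfold QZ. apply prodZ_split. Qed.

Lemma QZ_mono p q v n t : goodw p q v -> (QZ q v n <= QZ q v (n + t))%Z.
Proof. intros H. rewrite QZ_split. pose proof (QZ_ge p q v n H).
  pose proof (QZ_ge p q _ t (goodw_shift p q v n H)). nia. Qed.

Lemma QZ_mono' p q v n n' : goodw p q v -> (n <= n')%nat -> (QZ q v n <= QZ q v n')%Z.
Proof. intros H Hn. replace n' with (n + (n' - n))%nat by lia. apply (QZ_mono p); auto. Qed.

Lemma QZ_ext q v v' n : (forall i, (i < n)%nat -> v i = v' i) -> QZ q v n = QZ q v' n.
Proof. intros H. unfold QZ. apply prodZ_ext. intros i Hi. rewrite H; auto. Qed.

Lemma PZ_pm p q v n : goodw p q v -> PZ p v n = 1%Z \/ PZ p v n = (-1)%Z.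
Proof. intros H. induction n; unfold PZ in *; simpl. auto.
  destruct (H n) as [[Hp|Hp] _]; rewrite Hp; destruct IHn as [E|E]; rewrite E; auto. Qed.

Lemma IZR_QZ_pos p q v n : goodw p q v -> 1 <= IZR (QZ q v n).
Proof. intros H. pose proof (QZ_ge p q v n H). apply IZR_le. lia. Qed.

Lemma IZR_QZ_ge p q v n : goodw p q v -> INR n + 1 <= IZR (QZ q v n).
Proof. intros H. pose proof (QZ_ge p q v n H). rewrite INR_IZR_INZ.
  rewrite <- plus_IZR. apply IZR_le. lia. Qed.

Lemma comp_formula (p r : nat -> Z) q v n (x : R) : goodw p q v ->
  comp p r q v n x = (IZR (PZ p v n) * x + IZR (RZ p r q v n)) / IZR (QZ q v n).
Proof. intros H. revert x. induction n; intros x; simpl.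
  - unfold PZ, QZ. simpl. field.
  - rewrite IHn. unfold u. unfold PZ, QZ in *. simpl.
    pose proof (IZR_QZ_pos p q v n H) as HQ. unfold QZ in HQ.
    destruct (H n) as [_ Hq].
    assert (Hq' : 0 < IZR (Z.of_nat (q (v n)))) by (apply IZR_lt; lia).
    rewrite !mult_IZR, plus_IZR, mult_IZR, mult_IZR. rewrite <- INR_IZR_INZ in Hq'.
    rewrite <- INR_IZR_INZ. field. lra.
Qed.

Lemma comp_ext (p r : nat -> Z) q v v' n (x : R) :
  (forall i, (i < n)%nat -> v i = v' i) -> comp p r q v n x = comp p r q v' n x.
Proof. revert x. induction n; intros x H; simpl; auto.
  rewrite H by lia. apply IHn. intros; apply H; lia. Qed.

Lemma comp_split (p r : nat -> Z) q v k t (x : R) :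
  comp p r q v (k + t) x = comp p r q v k (comp p r q (fun s => v (k + s)%nat) t x).
Proof. revert x. induction t; intros x. rewrite Nat.add_0_r; reflexivity.
  rewrite Nat.add_succ_r. simpl. rewrite IHt. reflexivity. Qed.

Lemma comp_dist (p r : nat -> Z) q v n (a b : R) : goodw p q v ->
  Rabs (comp p r q v n a - comp p r q v n b) = Rabs (a - b) / IZR (QZ q v n).
Proof. intros H. rewrite !comp_formula by auto.
  pose proof (IZR_QZ_pos p q v n H) as HQ.
  replace ((IZR (PZ p v n) * a + IZR (RZ p r q v n)) / IZR (QZ q v n) -
    (IZR (PZ p v n) * b + IZR (RZ p r q v n)) / IZR (QZ q v n))
   with (IZR (PZ p v n) * (a - b) / IZR (QZ q v n)) by (field; lra).
  unfold Rdiv. rewrite !Rabs_mult. rewrite (Rabs_pos_eq (/ _)).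
  2: { left. apply Rinv_0_lt_compat. lra. }
  destruct (PZ_pm p q v n H) as [E|E]; rewrite E.
  rewrite Rabs_R1; ring. rewrite Rabs_left by (apply IZR_lt; lia). replace (IZR (-1)) with (-1) by reflexivity. ring. Qed.

Lemma comp_I N (p r : nat -> Z) q v n (lo hi : R) :
  (forall a, (a < N)%nat -> forall x, lo <= x <= hi -> lo <= u p r q a x <= hi) ->
  valid_word N v -> forall x, lo <= x <= hi -> lo <= comp p r q v n x <= hi.
Proof. intros HI Hv. induction n; intros x Hx; simpl; auto. Qed.

Lemma fin_min (n : nat) (P : nat -> R -> Prop) :
  (forall a d d', 0 < d' <= d -> P a d -> P a d') ->
  (forall a, (a < n)%nat -> exists d, 0 < d /\ P a d) ->
  exists d, 0 < d /\ forall a, (a < n)%nat -> P a d.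
Proof. intros Hm. induction n; intros H.
  - exists 1. split. lra. intros; lia.
  - destruct IHn as [d1 [Hd1 H1]]. intros; apply H; lia.
    destruct (H n) as [d2 [Hd2 H2]]. lia.
    exists (Rmin d1 d2). split. apply Rmin_glb_lt; auto.
    intros a Ha. destruct (Nat.eq_dec a n). subst. apply (Hm n d2). split.
    apply Rmin_glb_lt; auto. apply Rmin_r. auto.
    apply (Hm a d1). split. apply Rmin_glb_lt; auto. apply Rmin_l. apply H1; lia.
Qed.

Lemma Rmult_le_0_r (a b : R) : a <= 0 -> 0 <= b -> a * b <= 0.
Proof. intros; nra. Qed.
Lemma Rmult_le_0_l (a b : R) : 0 <= a -> b <= 0 -> a * b <= 0.
Proof. intros; nra. Qed.

Lemma between (A B t : R) : (t - A) * (t - B) <= 0 -> Rmin A B <= t <= Rmax A B.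
Proof. intros H. unfold Rmin, Rmax. destruct (Rle_dec A B); nra. Qed.

Lemma between' (A B t : R) : Rmin A B <= t <= Rmax A B -> (t - A) * (t - B) <= 0.
Proof. unfold Rmin, Rmax. destruct (Rle_dec A B); intros; nra. Qed.

Lemma u_between (p r : nat -> Z) q a (lo hi z : R) :
  (p a = 1%Z \/ p a = (-1)%Z) -> (1 <= q a)%nat -> lo <= z <= hi ->
  (u p r q a z - u p r q a lo) * (u p r q a z - u p r q a hi) <= 0.
Proof. intros Hp Hq Hz. assert (0 < INR (q a)) by (apply lt_0_INR; lia).
  unfold u. destruct Hp as [E|E]; rewrite E;
  [replace (IZR 1) with 1 by reflexivity | replace (IZR (-1)) with (-1) by reflexivity].
  replace (((1 * z + IZR (r a)) / INR (q a) - (1 * lo + IZR (r a)) / INR (q a)) *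
    ((1 * z + IZR (r a)) / INR (q a) - (1 * hi + IZR (r a)) / INR (q a)))
   with ((z - lo) * (z - hi) / (INR (q a) * INR (q a))) by (field; lra).
  apply Rmult_le_0_r. nra. left. apply Rinv_0_lt_compat. nra.
  replace (((-1 * z + IZR (r a)) / INR (q a) - (-1 * lo + IZR (r a)) / INR (q a)) *
    ((-1 * z + IZR (r a)) / INR (q a) - (-1 * hi + IZR (r a)) / INR (q a)))
   with ((z - lo) * (z - hi) / (INR (q a) * INR (q a))) by (field; lra).
  apply Rmult_le_0_r. nra. left. apply Rinv_0_lt_compat. nra.
Qed.

Lemma u_preimage (p r : nat -> Z) q a (lo hi c : R) :
  (p a = 1%Z \/ p a = (-1)%Z) -> (1 <= q a)%nat -> lo <= hi ->
  (c - u p r q a lo) * (c - u p r q a hi) <= 0 ->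
  exists z, lo <= z <= hi /\ u p r q a z = c.
Proof. intros Hp Hq Hlh Hc. assert (Q : 0 < INR (q a)) by (apply lt_0_INR; lia).
  unfold u in *. destruct Hp as [E|E]; rewrite E in *;
  [replace (IZR 1) with 1 in * by reflexivity | replace (IZR (-1)) with (-1) in * by reflexivity].
  - exists (INR (q a) * c - IZR (r a)). split. 2: field; lra.
    set (z := INR (q a) * c - IZR (r a)).
    assert (Ez : (z - lo) * (z - hi) = (INR (q a) * INR (q a)) * ((c - (1 * lo + IZR (r a)) / INR (q a)) *
       (c - (1 * hi + IZR (r a)) / INR (q a)))) by (unfold z; field; lra).
    assert ((z - lo) * (z - hi) <= 0). rewrite Ez. apply Rmult_le_0_l. nra. auto.
    nra.
  - exists (- (INR (q a) * c - IZR (r a))). split. 2: field; lra.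
    set (z := - (INR (q a) * c - IZR (r a))).
    assert (Ez : (z - lo) * (z - hi) = (INR (q a) * INR (q a)) * ((c - (-1 * lo + IZR (r a)) / INR (q a)) *
       (c - (-1 * hi + IZR (r a)) / INR (q a)))) by (unfold z; field; lra).
    assert ((z - lo) * (z - hi) <= 0). rewrite Ez. apply Rmult_le_0_l. nra. auto.
    nra.
Qed.

Lemma gap_pair (p r : nat -> Z) q a b (lo hi : R) :
  (p a = 1%Z \/ p a = (-1)%Z) -> (1 <= q a)%nat ->
  (p b = 1%Z \/ p b = (-1)%Z) -> (1 <= q b)%nat -> lo <= hi ->
  (forall x y, lo <= x <= hi -> lo <= y <= hi -> u p r q a x <> u p r q b y) ->
  exists d, 0 < d /\ forall z1 z2, lo <= z1 <= hi -> lo <= z2 <= hi ->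
    Rabs (u p r q a z1 - u p r q b z2) >= d.
Proof. intros Hpa Hqa Hpb Hqb Hlh Hd.
  set (A1 := u p r q a lo). set (B1 := u p r q a hi).
  set (A2 := u p r q b lo). set (B2 := u p r q b hi).
  assert (Ra : forall z, lo <= z <= hi -> Rmin A1 B1 <= u p r q a z <= Rmax A1 B1).
  { intros z Hz. apply between. apply u_between; auto. }
  assert (Rb : forall z, lo <= z <= hi -> Rmin A2 B2 <= u p r q b z <= Rmax A2 B2).
  { intros z Hz. apply between. apply u_between; auto. }
  destruct (Rlt_dec (Rmax A1 B1) (Rmin A2 B2)) as [L1|L1].
  { exists (Rmin A2 B2 - Rmax A1 B1). split. lra. intros z1 z2 H1 H2.
    specialize (Ra z1 H1). specialize (Rb z2 H2).
    rewrite Rabs_left1 by lra. lra. }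
  destruct (Rlt_dec (Rmax A2 B2) (Rmin A1 B1)) as [L2|L2].
  { exists (Rmin A1 B1 - Rmax A2 B2). split. lra. intros z1 z2 H1 H2.
    specialize (Ra z1 H1). specialize (Rb z2 H2).
    rewrite Rabs_right by lra. lra. }
  exfalso. apply Rnot_lt_le in L1. apply Rnot_lt_le in L2. set (c := Rmax (Rmin A1 B1) (Rmin A2 B2)).
  assert (m1 : Rmin A1 B1 <= Rmax A1 B1) by (unfold Rmin, Rmax; destruct Rle_dec; lra).
  assert (m2 : Rmin A2 B2 <= Rmax A2 B2) by (unfold Rmin, Rmax; destruct Rle_dec; lra).
  assert (C1 : Rmin A1 B1 <= c <= Rmax A1 B1).
  { unfold c. split. apply Rmax_l. apply Rmax_lub; lra. }
  assert (C2 : Rmin A2 B2 <= c <= Rmax A2 B2).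
  { unfold c. split. apply Rmax_r. apply Rmax_lub; lra. }
  destruct (u_preimage p r q a lo hi c) as [z1 [H1 E1]]; auto. apply between'; auto.
  destruct (u_preimage p r q b lo hi c) as [z2 [H2 E2]]; auto. apply between'; auto.
  apply (Hd z1 z2 H1 H2). congruence.
Qed.

Lemma gap_all N (p r : nat -> Z) q (lo hi : R) :
  (forall a, (a < N)%nat -> (p a = 1%Z \/ p a = (-1)%Z) /\ (2 <= q a)%nat) -> lo <= hi ->
  (forall a b, (a < N)%nat -> (b < N)%nat -> a <> b ->
        forall x y, lo <= x <= hi -> lo <= y <= hi -> u p r q a x <> u p r q b y) ->
  exists d, 0 < d /\ forall a b, (a < N)%nat -> (b < N)%nat -> a <> b ->
    forall z1 z2, lo <= z1 <= hi -> lo <= z2 <= hi -> Rabs (u p r q a z1 - u p r q b z2) >= d.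
Proof. intros Hpq Hlh Hd.
  destruct (fin_min N (fun a d => forall b, (b < N)%nat -> a <> b ->
    forall z1 z2, lo <= z1 <= hi -> lo <= z2 <= hi -> Rabs (u p r q a z1 - u p r q b z2) >= d))
    as [d [Hd0 Hd1]].
  - intros a d d' Hdd H b Hb Hab z1 z2 H1 H2. specialize (H b Hb Hab z1 z2 H1 H2). lra.
  - intros a Ha.
    destruct (fin_min N (fun b d => a <> b ->
      forall z1 z2, lo <= z1 <= hi -> lo <= z2 <= hi -> Rabs (u p r q a z1 - u p r q b z2) >= d))
      as [d [Hd0 Hd1]].
    + intros b d d' Hdd H Hab z1 z2 H1 H2. specialize (H Hab z1 z2 H1 H2). lra.
    + intros b Hb. destruct (Nat.eq_dec a b).
      * exists 1. split. lra. intros; contradiction.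
      * destruct (Hpq a Ha) as [Hpa Hqa]. destruct (Hpq b Hb) as [Hpb Hqb].
        destruct (gap_pair p r q a b lo hi) as [d [Hd0 Hd1]]; auto; try lia.
        exists d. split; auto.
    + exists d. split; auto.
  - exists d. split; auto.
Qed.

Lemma comp_inv (p r : nat -> Z) q v k (y : R) : goodw p q v ->
  comp p r q v k (IZR (PZ p v k) * (IZR (QZ q v k) * y - IZR (RZ p r q v k))) = y.
Proof. intros H. rewrite comp_formula by auto. pose proof (IZR_QZ_pos p q v k H).
  destruct (PZ_pm p q v k H) as [E|E]; rewrite E;
  [replace (IZR 1) with 1 by reflexivity | replace (IZR (-1)) with (-1) by reflexivity];
  field; lra. Qed.

Lemma coding_of (p r : nat -> Z) q v (lo hi y : R) : goodw p q v ->
  (forall n, exists z, lo <= z <= hi /\ y = comp p r q v n z) -> coding p r q v y.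
Proof. intros H Hz eps He. set (M := Rabs lo + Rabs hi + 1).
  destruct (INR_unbounded (M / eps)) as [n0 Hn0].
  exists n0. intros n Hn. destruct (Hz n) as [z [Hz1 Hz2]]. unfold R_dist. rewrite Hz2.
  rewrite comp_dist by auto. pose proof (IZR_QZ_ge p q v n H).
  assert (Hn' : INR n0 <= INR n) by (apply le_INR; lia).
  assert (Rabs (0 - z) <= Rabs lo + Rabs hi).
  { unfold Rabs. repeat destruct Rcase_abs; lra. }
  assert (HM : M < eps * (INR n + 1)).
  { assert (M / eps * eps = M) by (field; lra).
    assert (M / eps < INR n) by lra. nra. }
  pose proof (pos_INR n). apply (Rmult_lt_reg_r (IZR (QZ q v n))). lra.
  unfold Rdiv. rewrite Rmult_assoc, Rinv_l by lra. unfold M in HM. nra.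
Qed.

Lemma coding_tail (p r : nat -> Z) q v k (y z a : R) : goodw p q v ->
  coding p r q v y -> y = comp p r q v k z ->
  forall e, 0 < e -> exists t,
   Rabs (comp p r q (fun s => v (k + s)%nat) t 0 - z) < e /\
   Rabs (comp p r q (fun s => v (k + s)%nat) t 0 - comp p r q (fun s => v (k + s)%nat) t a) < e.
Proof. intros H Hc Hy e He. pose proof (IZR_QZ_pos p q v k H) as HQ.
  destruct (Hc (e / IZR (QZ q v k))) as [N1 HN1].
  { apply Rdiv_lt_0_compat; lra. }
  destruct (INR_unbounded (Rabs a / e)) as [n2 Hn2].
  set (t := Nat.max N1 n2). exists t.
  pose proof (goodw_shift p q v k H) as Hs.
  split.
  - specialize (HN1 (k + t)%nat ltac:(unfold t; lia)). unfold R_dist in HN1.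
    rewrite comp_split, Hy, comp_dist in HN1 by auto.
    apply (Rmult_lt_compat_r (IZR (QZ q v k))) in HN1; [|lra].
    unfold Rdiv in HN1. rewrite !Rmult_assoc, !Rinv_l, !Rmult_1_r in HN1 by lra. auto.
  - rewrite comp_dist by auto. pose proof (IZR_QZ_ge p q _ t Hs).
    assert (INR n2 <= INR t) by (apply le_INR; unfold t; lia).
    replace (0 - a) with (- a) by ring. rewrite Rabs_Ropp.
    assert (Rabs a / e * e = Rabs a) by (field; lra).
    assert (Rabs a < e * INR t) by nra.
    pose proof (pos_INR t). apply (Rmult_lt_reg_r (IZR (QZ q (fun s => v (k + s)%nat) t))). lra.
    unfold Rdiv. rewrite Rmult_assoc, Rinv_l by lra. pose proof (Rabs_pos a). nra.
Qed.

Lemma coding_in N (p r : nat -> Z) q v (lo hi y : R) : goodw p q v -> lo <= hi ->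
  (forall a, (a < N)%nat -> forall x, lo <= x <= hi -> lo <= u p r q a x <= hi) ->
  valid_word N v -> coding p r q v y ->
  forall k, exists z, lo <= z <= hi /\ y = comp p r q v k z.
Proof. intros H Hlh HI Hv Hc k.
  set (z := IZR (PZ p v k) * (IZR (QZ q v k) * y - IZR (RZ p r q v k))).
  assert (Hy : y = comp p r q v k z) by (unfold z; rewrite comp_inv; auto).
  exists z. split; auto.
  assert (Hv' : valid_word N (fun s => v (k + s)%nat)) by (intros i; apply Hv).
  split.
  - destruct (Rle_dec lo z) as [|Hn]; auto. exfalso. apply Rnot_le_lt in Hn.
    destruct (coding_tail p r q v k y z lo H Hc Hy ((lo - z)/2)) as [t [T1 T2]]. lra.
    pose proof (comp_I N p r q _ t lo hi HI Hv' lo ltac:(lra)).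
    apply Rabs_def2 in T1. apply Rabs_def2 in T2. lra.
  - destruct (Rle_dec z hi) as [|Hn]; auto. exfalso. apply Rnot_le_lt in Hn.
    destruct (coding_tail p r q v k y z hi H Hc Hy ((z - hi)/2)) as [t [T1 T2]]. lra.
    pose proof (comp_I N p r q _ t lo hi HI Hv' hi ltac:(lra)).
    apply Rabs_def2 in T1. apply Rabs_def2 in T2. lra.
Qed.

Lemma pseudo_eq p q w i len : goodw p q w ->
  pseudolength q w i len = ln (IZR (QZ q w (i + len))) - ln (IZR (QZ q w i)).
Proof. intros H. unfold pseudolength. induction len; simpl.
  rewrite Nat.add_0_r. ring.
  rewrite IHlen. rewrite Nat.add_succ_r. replace (QZ q w (S (i + len))) with (QZ q w (i + len) * Z.of_nat (q (w (i + len)%nat)))%Z by reflexivity.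
  rewrite mult_IZR. rewrite <- INR_IZR_INZ.
  pose proof (IZR_QZ_pos p q w (i + len) H). destruct (H (i + len)%nat) as [_ Hq].
  assert (0 < INR (q (w (i + len)%nat))) by (apply lt_0_INR; lia).
  rewrite ln_mult by lra. ring. Qed.

Lemma pseudo_ext q w i j len : (forall k, (k < len)%nat -> w (i + k)%nat = w (j + k)%nat) ->
  pseudolength q w i len = pseudolength q w j len.
Proof. intros H. unfold pseudolength. induction len; simpl; auto.
  rewrite IHlen by (intros; apply H; lia). rewrite H by lia. auto. Qed.

Lemma min_exists (P : nat -> Prop) : (exists n, P n) -> exists n, P n /\ forall n', P n' -> (n <= n')%nat.
Proof. intros [n Hn]. apply NNPP. intros Hno.
  assert (forall k, forall j, (j <= k)%nat -> ~ P j).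
  { induction k; intros j Hj HP.
    - apply Hno. exists j. split; auto. intros; lia.
    - destruct (Nat.eq_dec j (S k)). 2: apply (IHk j); auto; lia.
      subst. apply Hno. exists (S k). split; auto. intros n' Hn'.
      destruct (le_lt_dec (S k) n'); auto. exfalso. apply (IHk n'); auto; lia. }
  apply (H n n); auto. Qed.

Lemma qint_Z p q v n m : goodw p q v -> (1 <= m)%nat ->
  (QZ q v (n + m) <= 2 * q_int p q v n m)%Z /\ (q_int p q v n m <= 2 * QZ q v (n + m))%Z /\
  (1 <= q_int p q v n m)%Z.
Proof. intros H Hm. unfold q_int. rewrite QZ_split.
  change (prodZ (fun i => Z.of_nat (q (v i))) n) with (QZ q v n).
  change (prodZ (fun i => Z.of_nat (q (v (n + i)%nat))) m) with (QZ q (fun i => v (n + i)%nat) m).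
  change (prodZ (fun i => p (v (n + i)%nat)) m) with (PZ p (fun i => v (n + i)%nat) m).
  pose proof (QZ_ge p q v n H). pose proof (QZ_ge p q _ m (goodw_shift p q v n H)).
  destruct (PZ_pm p q _ m (goodw_shift p q v n H)) as [E|E]; rewrite E; nia. Qed.

Lemma qint_R p q v n m : goodw p q v -> (1 <= m)%nat ->
  IZR (QZ q v (n + m)) / 2 <= IZR (q_int p q v n m) /\
  IZR (q_int p q v n m) <= 2 * IZR (QZ q v (n + m)) /\ 1 <= IZR (q_int p q v n m).
Proof. intros H Hm. destruct (qint_Z p q v n m H Hm) as [A [B C]].
  apply IZR_le in A, B, C. rewrite mult_IZR in A, B. lra. Qed.

Definition perw (w : nat -> nat) (i d : nat) (s : nat) : nat :=
  if (s <? i)%nat then w s else w (i + (s - i) mod d)%nat.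

Lemma perw_valid N w i d : valid_word N w -> valid_word N (perw w i d).
Proof. intros H s. unfold perw. destruct (s <? i)%nat; apply H. Qed.

Lemma perw_per w i d : (1 <= d)%nat -> periodic_from (perw w i d) i d.
Proof. intros Hd. split; auto. intros s Hs. unfold perw.
  destruct (Nat.ltb_ge (s + d) i) as [_ E1]. rewrite E1 by lia.
  destruct (Nat.ltb_ge s i) as [_ E2]. rewrite E2 by lia.
  replace (s + d - i)%nat with ((s - i) + 1 * d)%nat by lia.
  rewrite Nat.Div0.mod_add. auto. Qed.

Lemma per_iter v n m : periodic_from v n m -> forall t s, (n <= s)%nat -> v (s + t * m)%nat = v s.
Proof. intros [Hm H] t. induction t; intros s Hs. rewrite Nat.add_0_r; auto.
  replace (s + S t * m)%nat with ((s + t * m) + m)%nat by lia. rewrite H by lia. auto. Qed.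

Lemma per_transfer v n m i d : periodic_from v n m -> periodic_from v i d -> (n <= i)%nat ->
  periodic_from v n d.
Proof. intros Hnm Hid Hni. split. apply Hid. intros s Hs.
  destruct Hnm as [Hm Hnm'].
  rewrite <- (per_iter v n m (conj Hm Hnm') i (s + d)%nat) by lia.
  rewrite <- (per_iter v n m (conj Hm Hnm') i s) by lia.
  replace (s + d + i * m)%nat with ((s + i * m) + d)%nat by lia.
  apply Hid. nia. Qed.

Lemma perw_agree w i j len : (i < j)%nat ->
  (forall k, (k < len)%nat -> w (i + k)%nat = w (j + k)%nat) ->
  forall s, (s < j + len)%nat -> perw w i (j - i) s = w s.
Proof. intros Hij Hm.
  assert (forall n s, (s < n)%nat -> (s < j + len)%nat -> perw w i (j - i) s = w s).
  { induction n; intros s Hs Hsl. lia.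
    destruct (lt_dec s i).
    - unfold perw. destruct (Nat.ltb_lt s i) as [_ E]. rewrite E by auto. auto.
    - destruct (lt_dec s j).
      + unfold perw. destruct (Nat.ltb_ge s i) as [_ E]. rewrite E by lia.
        rewrite Nat.mod_small by lia. f_equal. lia.
      + destruct (perw_per w i (j - i) ltac:(lia)) as [_ Hp].
        replace s with ((s - (j - i)) + (j - i))%nat by lia. rewrite Hp by lia.
        rewrite IHn by lia. replace (s - (j - i) + (j - i))%nat with (j + (s - j))%nat by lia.
        replace (s - (j - i))%nat with (i + (s - j))%nat by lia. apply Hm. lia. }
  intros s Hs. apply (H (S s)); lia. Qed.

Lemma goodw_of N (p : nat -> Z) q v :
  (forall a, (a < N)%nat -> (p a = 1%Z \/ p a = (-1)%Z) /\ (2 <= q a)%nat) ->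
  valid_word N v -> goodw p q v.
Proof. intros H Hv i. apply H. apply Hv. Qed.

Lemma perw_agree0 w i d : (1 <= d)%nat -> forall s, (s < i + d)%nat -> perw w i d s = w s.
Proof. intros Hd s Hs. pose proof (perw_agree w i (i + d) 0 ltac:(lia) ltac:(intros; lia) s ltac:(lia)).
  replace (i + d - i)%nat with d in H by lia. auto. Qed.

Lemma periodic_point N (p r : nat -> Z) q w (lo hi : R) i d :
  (forall a, (a < N)%nat -> (p a = 1%Z \/ p a = (-1)%Z) /\ (2 <= q a)%nat) -> lo <= hi ->
  (forall a, (a < N)%nat -> forall x, lo <= x <= hi -> lo <= u p r q a x <= hi) ->
  valid_word N w -> (1 <= d)%nat ->
  exists y, is_rational y /\ coding p r q (perw w i d) y.
Proof. intros Hpq Hlh HI Hv Hd.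
  set (w' := perw w i d).
  assert (Hg : goodw p q w) by (apply (goodw_of N); auto).
  assert (Hv' : valid_word N w') by (apply perw_valid; auto).
  assert (Hg' : goodw p q w') by (apply (goodw_of N); auto).
  set (ws := fun s => w (i + s)%nat).
  assert (Hgs : goodw p q ws) by (apply goodw_shift; auto).
  assert (Hvs : valid_word N ws) by (intros s; apply Hv).
  set (P2 := PZ p ws d). set (R2 := RZ p r q ws d). set (Q2 := QZ q ws d).
  assert (HQ2 : (2 <= Q2)%Z) by (pose proof (QZ_ge p q ws d Hgs); unfold Q2; lia).
  assert (HP2 : P2 = 1%Z \/ P2 = (-1)%Z) by (apply (PZ_pm p q); auto).
  assert (HD : (1 <= Q2 - P2)%Z) by lia.
  assert (HDR : 1 <= IZR (Q2 - P2)) by (apply IZR_le; lia).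
  assert (HQR : 2 <= IZR Q2) by (apply IZR_le; lia).
  set (z := IZR R2 / IZR (Q2 - P2)).
  assert (Hfix : comp p r q ws d z = z).
  { rewrite comp_formula by auto. fold P2 R2 Q2. unfold z. rewrite minus_IZR in *.
    field. lra. }
  assert (Hz : lo <= z <= hi).
  { pose proof (comp_dist p r q ws d lo z Hgs) as D1. pose proof (comp_dist p r q ws d hi z Hgs) as D2.
    rewrite Hfix in D1, D2. fold Q2 in D1, D2.
    pose proof (comp_I N p r q ws d lo hi HI Hvs lo ltac:(lra)).
    pose proof (comp_I N p r q ws d lo hi HI Hvs hi ltac:(lra)).
    split.
    - destruct (Rle_dec lo z) as [|Hn]; auto. exfalso. apply Rnot_le_lt in Hn.
      rewrite (Rabs_right (lo - z)) in D1 by lra. rewrite Rabs_right in D1 by lra.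
      assert ((lo - z) / IZR Q2 < lo - z).
      { apply (Rmult_lt_reg_r (IZR Q2)). lra. unfold Rdiv. rewrite Rmult_assoc, Rinv_l by lra. nra. }
      lra.
    - destruct (Rle_dec z hi) as [|Hn]; auto. exfalso. apply Rnot_le_lt in Hn.
      rewrite (Rabs_left (hi - z)) in D2 by lra. rewrite Rabs_left1 in D2 by lra.
      assert (- (hi - z) / IZR Q2 < - (hi - z)).
      { apply (Rmult_lt_reg_r (IZR Q2)). lra. unfold Rdiv. rewrite Rmult_assoc, Rinv_l by lra. nra. }
      lra. }
  set (y := comp p r q w i z).
  exists y. split.
  - exists (PZ p w i * R2 + RZ p r q w i * (Q2 - P2))%Z. exists (QZ q w i * (Q2 - P2))%Z.
    pose proof (QZ_ge p q w i Hg). split. nia.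
    unfold y. rewrite comp_formula by auto. unfold z.
    pose proof (IZR_QZ_pos p q w i Hg).
    rewrite plus_IZR, !mult_IZR. field. lra.
  - assert (Hper : forall t, y = comp p r q w' (i + t * d) z).
    { induction t.
      - rewrite Nat.add_0_r. unfold y. apply comp_ext. intros s Hs. symmetry. apply perw_agree0; lia.
      - replace (i + S t * d)%nat with ((i + t * d) + d)%nat by lia. rewrite comp_split.
        replace (comp p r q (fun s => w' (i + t * d + s)%nat) d z) with
          (comp p r q ws d z). rewrite Hfix. auto.
        apply comp_ext. intros s Hs. unfold ws.
        replace (i + t * d + s)%nat with ((i + s) + t * d)%nat by lia.
        rewrite (per_iter w' i d (perw_per w i d Hd)) by lia.
        unfold w'. rewrite perw_agree0; auto. lia. }
    apply (coding_of p r q w' lo hi y Hg'). intros n.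
    rewrite (Hper n). replace (i + n * d)%nat with (n + (i + n * d - n))%nat by nia.
    rewrite comp_split. eexists. split. 2: reflexivity.
    apply (comp_I N). auto. intros s; apply Hv'. auto.
Qed.

Lemma ln_le (a b : R) : 0 < a -> a <= b -> ln a <= ln b.
Proof. intros Ha Hab. destruct Hab as [H|H]. left. apply ln_increasing; auto. subst; lra. Qed.

Lemma fwd_core N (p r : nat -> Z) q (lo hi : R) (psi : R -> R) (c eps : R) w (x : R) :
  (forall a, (a < N)%nat -> (p a = 1%Z \/ p a = (-1)%Z) /\ (2 <= q a)%nat) -> lo <= hi ->
  (forall a, (a < N)%nat -> forall x, lo <= x <= hi -> lo <= u p r q a x <= hi) ->
  (forall t, 0 < t -> 0 < psi t) ->
  (forall s t, 0 < s -> s <= t -> psi t <= psi s) ->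
  0 < c -> (forall t, 0 < t -> c * psi t <= psi (2 * t)) ->
  valid_word N w -> coding p r q w x -> eps > 0 ->
  (forall (y : R) (w' : nat -> nat) (n m : nat),
      is_rational y -> valid_word N w' -> coding p r q w' y ->
      min_preperiod w' n -> min_period w' n m ->
      Rabs (x - y) >= eps * psi (IZR (q_int p q w' n m)) / IZR (q_int p q w' n m)) ->
  forall i j len, (i < j)%nat -> (forall k, (k < len)%nat -> w (i + k)%nat = w (j + k)%nat) ->
  ln (IZR (QZ q w (j + len))) - ln (IZR (QZ q w j)) <=
    ln (2 * (hi - lo) / (eps * c)) - ln (psi (IZR (QZ q w j))).
Proof. intros Hpq Hlh HI Hpos Hmono Hc Hslow Hv Hx He Hb i j len Hij Hm.
  set (d := (j - i)%nat). set (w' := perw w i d).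
  assert (Hd : (1 <= d)%nat) by (unfold d; lia).
  assert (Hg : goodw p q w) by (apply (goodw_of N); auto).
  assert (Hv' : valid_word N w') by (apply perw_valid; auto).
  assert (Hg' : goodw p q w') by (apply (goodw_of N); auto).
  destruct (periodic_point N p r q w lo hi i d Hpq Hlh HI Hv Hd) as [y [Hyr Hyc]].
  fold w' in Hyc.
  destruct (min_exists (fun n => exists m, periodic_from w' n m)) as [n0 [Hn0 Hn0m]].
  { exists i, d. apply perw_per; auto. }
  assert (Hn0i : (n0 <= i)%nat). { apply Hn0m. exists d. apply perw_per; auto. }
  destruct Hn0 as [m1 Hm1].
  destruct (min_exists (fun m => periodic_from w' n0 m)) as [m0 [Hm0 Hm0m]].
  { exists m1; auto. }
  assert (Hm0d : (m0 <= d)%nat).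
  { apply Hm0m. apply (per_transfer w' n0 m1 i d); auto. apply perw_per; auto. }
  assert (Hm0p : (1 <= m0)%nat) by apply Hm0.
  specialize (Hb y w' n0 m0 Hyr Hv' Hyc (conj (ex_intro _ m1 Hm1) Hn0m) (conj Hm0 Hm0m)).
  destruct (qint_R p q w' n0 m0 Hg' Hm0p) as [Q1 [Q2 Q3]].
  set (qi := IZR (q_int p q w' n0 m0)) in *.
  set (B := IZR (QZ q w j)). set (A := IZR (QZ q w (j + len))).
  assert (HB : 1 <= B) by (apply (IZR_QZ_pos p); auto).
  assert (HA : 1 <= A) by (apply (IZR_QZ_pos p); auto).
  assert (Hqi : qi <= 2 * B).
  { assert (IZR (QZ q w' (n0 + m0)) <= B); [|lra].
    unfold B. apply IZR_le. rewrite <- (QZ_ext q w' w j).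
    apply (QZ_mono' p); auto. unfold d in Hm0d; lia.
    intros s Hs. unfold w'. apply perw_agree0; auto. unfold d; lia. }
  assert (Hdist : Rabs (x - y) <= (hi - lo) / A).
  { destruct (coding_in N p r q w lo hi x Hg Hlh HI Hv Hx (j + len)) as [z1 [Hz1 E1]].
    destruct (coding_in N p r q w' lo hi y Hg' Hlh HI Hv' Hyc (j + len)) as [z2 [Hz2 E2]].
    rewrite E1, E2. rewrite (comp_ext p r q w' w).
    rewrite comp_dist by auto. fold A. unfold Rdiv. apply Rmult_le_compat_r.
    left; apply Rinv_0_lt_compat; lra. unfold Rabs; destruct Rcase_abs; lra.
    intros s Hs. unfold w', d. apply (perw_agree w i j len); auto. }
  assert (Hps : c * psi B <= psi qi).
  { apply Rle_trans with (psi (2 * B)). apply Hslow; lra. apply Hmono; lra. }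
  assert (HpB : 0 < psi B) by (apply Hpos; lra).
  assert (Hpq' : 0 < psi qi) by (apply Hpos; lra).
  assert (Key : eps * c * psi B * A <= 2 * B * (hi - lo)).
  { assert (H1 : eps * psi qi / qi <= (hi - lo) / A) by lra.
    assert (H2 : eps * psi qi * A <= (hi - lo) * qi).
    { apply (Rmult_le_compat_r (A * qi)) in H1. 2: nra.
      replace (eps * psi qi / qi * (A * qi)) with (eps * psi qi * A) in H1 by (field; lra).
      replace ((hi - lo) / A * (A * qi)) with ((hi - lo) * qi) in H1 by (field; lra). auto. }
    assert (0 <= hi - lo) by lra.
    assert (eps * c * psi B * A <= eps * psi qi * A).
    { replace (eps * c * psi B * A) with ((eps * A) * (c * psi B)) by ring.
      replace (eps * psi qi * A) with ((eps * A) * psi qi) by ring.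
      apply Rmult_le_compat_l. nra. auto. }
    assert ((hi - lo) * qi <= (hi - lo) * (2 * B)) by (apply Rmult_le_compat_l; lra).
    lra. }
  assert (Hc2 : 0 < eps * c) by nra.
  destruct (Rlt_dec 0 (hi - lo)) as [Hpos2|Hz].
  2: { exfalso. assert (0 < eps * c * psi B * A) by (apply Rmult_lt_0_compat; nra). nra. }
  assert (Hln : ln (A * psi B / B) <= ln (2 * (hi - lo) / (eps * c))).
  { apply ln_le. apply Rdiv_lt_0_compat; nra.
    apply (Rmult_le_reg_r (B * (eps * c))). nra.
    replace (A * psi B / B * (B * (eps * c))) with (eps * c * psi B * A) by (field; lra).
    replace (2 * (hi - lo) / (eps * c) * (B * (eps * c))) with (2 * B * (hi - lo)) by (field; lra).
    auto. }
  unfold Rdiv in Hln at 1. rewrite !ln_mult in Hln by (try apply Rinv_0_lt_compat; nra).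
  rewrite ln_Rinv in Hln by lra. lra.
Qed.

Lemma cross (a b c d : R) : 0 < b -> 0 < d -> a * d <= c * b -> a / b <= c / d.
Proof. intros Hb Hd H. apply (Rmult_le_reg_r (b * d)). nra.
  replace (a / b * (b * d)) with (a * d) by (field; lra).
  replace (c / d * (b * d)) with (c * b) by (field; lra). auto. Qed.

Lemma bwd_core N (p r : nat -> Z) q (lo hi : R) (psi : R -> R) (B0 C K : R) w (x : R) :
  (forall a, (a < N)%nat -> (p a = 1%Z \/ p a = (-1)%Z) /\ (2 <= q a)%nat) -> lo <= hi ->
  (forall a, (a < N)%nat -> forall x, lo <= x <= hi -> lo <= u p r q a x <= hi) ->
  (forall a b, (a < N)%nat -> (b < N)%nat -> a <> b ->
        forall x y, lo <= x <= hi -> lo <= y <= hi -> u p r q a x <> u p r q b y) ->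
  (forall t, 0 < t -> 0 < psi t) ->
  (forall s t, 0 < s -> s <= t -> psi t <= psi s) ->
  (forall t, 0 < t -> psi t <= B0) ->
  0 < C -> (forall t, 0 < t -> psi (/ 2 * t) <= C * psi t) ->
  valid_word N w -> coding p r q w x ->
  (forall (l len i j : nat),
    (1 <= len)%nat -> i <> j -> (i + len <= l)%nat -> (j + len <= l)%nat ->
    (forall k, (k < len)%nat -> w (i + k)%nat = w (j + k)%nat) ->
    pseudolength q w i len <= K + Psi psi (pseudolength q w 0 (l - len))) ->
  badly_symb_approx N p r q psi x.
Proof. intros Hpq Hlh HI Hd Hpos Hmono HB0 HC Hslow Hv Hx Hc.
  assert (Hg : goodw p q w) by (apply (goodw_of N); auto).
  destruct (gap_all N p r q lo hi Hpq Hlh Hd) as [del [Hdel Hgap]].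
  set (B' := Rmax B0 1). assert (HB' : 1 <= B') by apply Rmax_r.
  set (E := exp K). assert (HE : 0 < E) by apply exp_pos.
  set (eps := Rmin (del / (2 * B')) (del / (2 * C * E))).
  assert (He1 : eps <= del / (2 * B')) by apply Rmin_l.
  assert (He2 : eps <= del / (2 * C * E)) by apply Rmin_r.
  assert (He0 : 0 < eps).
  { apply Rmin_glb_lt; apply Rdiv_lt_0_compat; nra. }
  exists eps. split. lra.
  intros y w' n m Hyr Hv' Hyc Hpre Hper.
  assert (Hg' : goodw p q w') by (apply (goodw_of N); auto).
  destruct Hper as [Hper Hpermin]. assert (Hm : (1 <= m)%nat) by apply Hper.
  destruct (qint_R p q w' n m Hg' Hm) as [Q1 [Q2 Q3]].
  set (qi := IZR (q_int p q w' n m)) in *.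
  set (Qnm := IZR (QZ q w' (n + m))) in *.
  assert (HQnm : 1 <= Qnm) by (apply (IZR_QZ_pos p); auto).
  assert (Hpn : 0 < psi Qnm) by (apply Hpos; lra).
  assert (Hbound : forall k, (n + m < k)%nat -> (forall s, (s < k)%nat -> w s = w' s) ->
     IZR (QZ q w k) <= E * Qnm / psi Qnm).
  { intros k Hk Hag.
    assert (Hmatch : forall k0, (k0 < k - n - m)%nat -> w (n + k0)%nat = w (n + m + k0)%nat).
    { intros k0 Hk0. rewrite !Hag by lia. destruct Hper as [_ Hp].
      replace (n + m + k0)%nat with ((n + k0) + m)%nat by lia. rewrite Hp by lia. auto. }
    specialize (Hc k (k - n - m)%nat n (n + m)%nat ltac:(lia) ltac:(lia) ltac:(lia) ltac:(lia) Hmatch).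
    rewrite (pseudo_ext q w n (n + m)) in Hc by auto.
    rewrite !(pseudo_eq p) in Hc by auto.
    replace (n + m + (k - n - m))%nat with k in Hc by lia.
    replace (0 + (k - (k - n - m)))%nat with (n + m)%nat in Hc by lia.
    replace (QZ q w 0) with 1%Z in Hc by reflexivity. rewrite ln_1 in Hc.
    rewrite (QZ_ext q w w' (n + m)) in Hc by (intros; apply Hag; lia). fold Qnm in Hc.
    unfold Psi in Hc. replace (ln Qnm - 0) with (ln Qnm) in Hc by ring.
    rewrite exp_ln in Hc by lra.
    pose proof (IZR_QZ_pos p q w k Hg) as HQk.
    assert (Hl : ln (IZR (QZ q w k)) <= ln Qnm + K - ln (psi Qnm)) by lra.
    rewrite <- (exp_ln (IZR (QZ q w k))) by lra.
    replace (E * Qnm / psi Qnm) with (exp (ln Qnm + K - ln (psi Qnm))).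
    destruct Hl as [Hl|Hl]. left; apply exp_increasing; auto. rewrite Hl; lra.
    unfold Rminus. rewrite !exp_plus, exp_Ropp, !exp_ln by lra. unfold E. field. lra. }
  destruct (classic (exists k, w k <> w' k)) as [[k0 Hk0]|Hno].
  - destruct (min_exists (fun k => w k <> w' k)) as [k [Hk Hkmin]]. exists k0; auto.
    assert (Hag : forall s, (s < k)%nat -> w s = w' s).
    { intros s Hs. apply NNPP. intros Hn. specialize (Hkmin s Hn). lia. }
    destruct (coding_in N p r q w lo hi x Hg Hlh HI Hv Hx (S k)) as [z1 [Hz1 E1]].
    destruct (coding_in N p r q w' lo hi y Hg' Hlh HI Hv' Hyc (S k)) as [z2 [Hz2 E2]].
    simpl in E1, E2. rewrite <- (comp_ext p r q w w') in E2 by (intros; apply Hag; auto).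
    set (Qk := IZR (QZ q w k)).
    assert (HQk : 1 <= Qk) by (apply (IZR_QZ_pos p); auto).
    assert (Hxy : del / Qk <= Rabs (x - y)).
    { rewrite E1, E2, comp_dist by auto. fold Qk. unfold Rdiv. apply Rmult_le_compat_r.
      left; apply Rinv_0_lt_compat; lra.
      apply Rge_le. apply Hgap; auto. }
    apply Rle_ge. apply Rle_trans with (del / Qk); auto.
    assert (Hpqi : 0 < psi qi) by (apply Hpos; lra).
    apply cross; try lra.
    destruct (le_lt_dec k (n + m)) as [Hkl|Hkl].
    + assert (Qk <= Qnm).
      { unfold Qk, Qnm. apply IZR_le. rewrite (QZ_ext q w w' k) by auto. apply (QZ_mono' p); auto. }
      assert (psi qi <= B') by (apply Rle_trans with B0; [apply HB0; lra | apply Rmax_l]).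
      assert (eps * (2 * B') <= del).
      { apply (Rmult_le_compat_r (2 * B')) in He1. 2: lra.
        replace (del / (2 * B') * (2 * B')) with del in He1 by (field; lra). auto. }
      assert (eps * psi qi * Qk <= eps * B' * Qnm).
      { apply Rmult_le_compat. nra. lra. apply Rmult_le_compat_l; lra. auto. }
      nra.
    + assert (Qk <= E * Qnm / psi Qnm) by (apply Hbound; auto).
      assert (psi qi <= C * psi Qnm).
      { apply Rle_trans with (psi (/ 2 * Qnm)). apply Hmono; lra. apply Hslow; lra. }
      assert (eps * (2 * C * E) <= del).
      { apply (Rmult_le_compat_r (2 * C * E)) in He2. 2: nra.
        replace (del / (2 * C * E) * (2 * C * E)) with del in He2 by (field; lra). auto. }
      assert (eps * psi qi * Qk <= eps * (C * psi Qnm) * (E * Qnm / psi Qnm)).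
      { apply Rmult_le_compat. nra. lra. apply Rmult_le_compat_l; lra. auto. }
      replace (eps * (C * psi Qnm) * (E * Qnm / psi Qnm)) with (eps * C * E * Qnm) in H2 by (field; lra).
      assert (eps * C * E * Qnm <= eps * C * E * (2 * qi)).
      { apply Rmult_le_compat_l. apply Rmult_le_pos; [apply Rmult_le_pos|]; lra. lra. }
      assert (eps * (2 * C * E) * qi <= del * qi) by (apply Rmult_le_compat_r; lra).
      lra.
  - exfalso.
    assert (Hall : forall s, w s = w' s).
    { intros s. apply NNPP. intros Hn. apply Hno. exists s; auto. }
    destruct (INR_unbounded (E * Qnm / psi Qnm)) as [k0 Hk0].
    set (k := (k0 + n + m + 1)%nat).
    pose proof (Hbound k ltac:(unfold k; lia) ltac:(intros; apply Hall)).
    pose proof (IZR_QZ_ge p q w k Hg).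
    assert (INR k0 <= INR k) by (apply le_INR; unfold k; lia). lra.
Qed.

Theorem lemma4p3 (N : nat) (p r : nat -> Z) (q : nat -> nat)
  (HIFS : rational_IFS_SSC N p r q)
  (psi : R -> R) (Hpsi : admissible_psi psi)
  (w : nat -> nat) (Hw : valid_word N w) (x : R) (Hx : coding p r q w x) :
  badly_symb_approx N p r q psi x <->
  exists K : R, forall (l len i j : nat),
    (1 <= len)%nat -> i <> j -> (i + len <= l)%nat -> (j + len <= l)%nat ->
    (forall k, (k < len)%nat -> w (i + k)%nat = w (j + k)%nat) ->
    pseudolength q w i len <= K + Psi psi (pseudolength q w 0 (l - len)).
Proof.
  destruct HIFS as [Hpq [lo [hi [Hlh [HI Hd]]]]].
  destruct Hpsi as [Hpos [Hmono [[B0 HB0] Hslow]]].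
  assert (Hg : goodw p q w) by (apply (goodw_of N); auto).
  split.
  - intros [eps [He Hb]].
    destruct (Hslow 2) as [c [C' [Hc0 [HcC Hsl]]]]. lra.
    set (K := ln (2 * (hi - lo) / (eps * c))).
    exists K.
    assert (Main : forall l len i j, (i < j)%nat -> (j + len <= l)%nat ->
      (forall k, (k < len)%nat -> w (i + k)%nat = w (j + k)%nat) ->
      pseudolength q w j len <= K + Psi psi (pseudolength q w 0 (l - len))).
    { intros l len i j Hij Hjl Hm.
      pose proof (fwd_core N p r q lo hi psi c eps w x Hpq Hlh HI Hpos Hmono Hc0
        (fun t Ht => proj1 (Hsl t Ht)) Hw Hx He Hb i j len Hij Hm) as F.
      rewrite !(pseudo_eq p) by auto.
      replace (0 + (l - len))%nat with (l - len)%nat by lia.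
      replace (QZ q w 0) with 1%Z by reflexivity. rewrite ln_1.
      unfold Psi. replace (ln (IZR (QZ q w (l - len))) - 0) with (ln (IZR (QZ q w (l - len)))) by ring.
      pose proof (IZR_QZ_pos p q w (l - len) Hg).
      pose proof (IZR_QZ_pos p q w j Hg).
      rewrite exp_ln by lra.
      assert (IZR (QZ q w j) <= IZR (QZ q w (l - len))).
      { apply IZR_le. apply (QZ_mono' p); auto. lia. }
      assert (ln (psi (IZR (QZ q w (l - len)))) <= ln (psi (IZR (QZ q w j)))).
      { apply ln_le. apply Hpos; lra. apply Hmono; lra. }
      fold K in F. lra. }
    intros l len i j Hlen Hij Hil Hjl Hm.
    destruct (lt_dec i j) as [Hlt|Hge].
    + rewrite (pseudo_ext q w i j) by auto. apply (Main l len i j); auto.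
    +
      apply (Main l len j i); auto. lia. intros; symmetry; auto.
  - intros [K Hc].
    destruct (Hslow (/ 2)) as [c [C [Hc0 [HcC Hsl]]]]. lra.
    apply (bwd_core N p r q lo hi psi B0 C K w x); auto. lra.
    intros t Ht. apply (Hsl t Ht).
Qed.
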